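(* Let $\phi,\psi$ be literals on two distinct atoms, and let $C=\{\mathbf{O}(\phi),\ \mathbf{O}(\neg\phi|\psi),\ \mathbf{O}(\phi|\neg\psi)\}$ (a contrary-to-duty framework). Then $C$ is modelled by a consistent CP-net: the prescriptive CP-net induced by $C$ is consistent and its induced preorder is a preference model satisfying every norm in $C$.
   Context: Norms: $\mathbf{O}(\chi|\theta)$ reads ''under condition $\chi$ (a conjunction of literals), the literal $\theta$ is obligatory''; $\mathbf{O}(\theta)$ abbreviates $\mathbf{O}(\top|\theta)$. Thus $C$ says: $\phi$ is obligatory; under $\neg\phi$, $\psi$ is obligatory; under $\phi$, $\neg\psi$ is obligatory. Outcomes are complete truth assignments to the atoms (here: to the variables $\Phi$, $\Psi$ of $\phi,\psi$, each with two values, $\bar\phi$ denoting the complement of $\phi$). A preference model is a preorder $\preceq$ on outcomes; $v\preceq_\theta u$ means $v,u$ differ only in the variable of $\theta$ and $v\preceq u$. A preference model satisfies $\mathbf{O}(\chi|\theta)$ iff for all outcomes $v,u$ with $v\models\chi$, $u\models\chi$: if $v\models\theta$ and $v\preceq_\theta u$ then $u\models\theta$. A CP-net (with indifference) over binary variables consists of a directed dependency graph and, for each variable, a conditional preference table of statements ''$a: x\prec y$'' or ''$a: x\approx y$'' over its two values given an assignment $a$ to its parents. Its induced preorder is the reflexive transitive closure of the single-variable flips: outcomes differing only in variable $X$ are related as the applicable statement of the table of $X$ (given the parents' values) ranks their $X$-values. The prescriptive CP-net of a set of obligations adds, for each $\mathbf{O}(\chi|\theta)$, edges from the variables of the literals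 of $\chi$ to the variable $\Theta$ of $\theta$ and the statement $\chi:\bar\theta\prec\theta$ to the table of $\Theta$. A CP-net is consistent if its induced order contains no dominance cycle, i.e. no outcome is strictly preferred to itself. *)

(* Defs.v *)
From mathcomp Require Import all_boot.
From Stdlib Require Import Relations. From Stdlib Require List.
Set Implicit Arguments. Unset Strict Implicit. Unset Printing Implicit Defensive.

(* A literal on atom X is the pair (X, b): it is the positive literal X if
   b = true and the negative literal ~X if b = false. *)
Definition literal (V : Type) := (V * bool)%type.
Definition neg_lit (V : Type) (l : literal V) : literal V := (l.1, ~~ l.2).

Definition outcome (V : Type) := V -> bool.
Definition sat_lit (V : Type) (o : outcome V) (l : literal V) : Prop := o l.1 = l.2.
Definition sat_conj (V : Type) (o : outcome V) (chi : seq (literal V)) : Prop :=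
  forall l, List.In l chi -> sat_lit o l.

(* O(chi | theta): under condition chi, literal theta is obligatory. *)
Record obligation (V : Type) := Obl { ocond : seq (literal V); oobj : literal V }.

Definition agree_off (V : eqType) (X : V) (v u : outcome V) : Prop :=
  forall Y, Y != X -> v Y = u Y.

Definition rel_on_var (V : eqType) (R : outcome V -> outcome V -> Prop) (X : V)
  (v u : outcome V) : Prop := agree_off X v u /\ R v u.

Definition is_preorder (V : Type) (R : outcome V -> outcome V -> Prop) : Prop :=
  (forall x, R x x) /\ (forall x y z, R x y -> R y z -> R x z).

Definition satisfies_obl (V : eqType) (R : outcome V -> outcome V -> Prop)
  (n : obligation V) : Prop :=
  forall v u, sat_conj v (ocond n) -> sat_conj u (ocond n) ->
    sat_lit v (oobj n) -> rel_on_var R (oobj n).1 v u -> sat_lit u (oobj n).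

Inductive cmp := Prec | Indiff.
(* statement  "scond : slo < shi"  (Prec) or "scond : slo ~ shi" (Indiff) *)
Record cpstmt (V : Type) := CPStmt
  { scond : seq (literal V); skind : cmp; slo : bool; shi : bool }.
Record cpnet (V : Type) := CPNet
  { cp_graph : V -> V -> bool;            (* dependency graph: edge X -> Y *)
    cp_table : V -> seq (cpstmt V) }.

Definition strict_flip (V : eqType) (N : cpnet V) (v u : outcome V) : Prop :=
  exists X s, List.In s (cp_table N X) /\ skind s = Prec /\ agree_off X v u /\
    sat_conj v (scond s) /\ v X = slo s /\ u X = shi s.

Definition indiff_flip (V : eqType) (N : cpnet V) (v u : outcome V) : Prop :=
  exists X s, List.In s (cp_table N X) /\ skind s = Indiff /\ agree_off X v u /\
    sat_conj v (scond s) /\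
    ((v X = slo s /\ u X = shi s) \/ (v X = shi s /\ u X = slo s)).

Definition flip (V : eqType) (N : cpnet V) (v u : outcome V) : Prop :=
  strict_flip N v u \/ indiff_flip N v u.

Definition induced (V : eqType) (N : cpnet V) : outcome V -> outcome V -> Prop :=
  clos_refl_trans (outcome V) (flip N).

(* consistency: no dominance cycle, i.e. no cycle of flips containing a strict
   flip (no outcome strictly preferred to itself) *)
Definition consistent (V : eqType) (N : cpnet V) : Prop :=
  ~ (exists v u, strict_flip N v u /\ induced N u v).

Definition prescriptive (V : eqType) (C : seq (obligation V)) : cpnet V :=
  CPNet (fun X Y => has (fun n => ((oobj n).1 == Y) && (X \in map fst (ocond n))) C)
        (fun X => [seq CPStmt (ocond n) Prec (~~ (oobj n).2) (oobj n).2
                  | n <- C & (oobj n).1 == X]).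

(* Main.v *)
Require Import Defs.
From mathcomp Require Import all_boot.
From Stdlib Require Import Relations. From Stdlib Require List.

Section S.
Variables (V : eqType) (a b : V) (pa pb : bool).
Hypothesis hab : a != b.

Definition CC : seq (obligation V) :=
  [:: Obl [::] (a, pa); Obl [:: neg_lit (a, pa)] (b, pb);
      Obl [:: (a, pa)] (neg_lit (b, pb))].

Definition rk (o : outcome V) : nat :=
  (if o a == pa then 2 else 0) +
  (if o a == pa then o b != pb else o b == pb).

Lemma flip_rk v u : flip (prescriptive CC) v u -> rk v < rk u.
Proof.
have hba : (b == a) = false by apply/negbTE; rewrite eq_sym.
case=> [[X [s [Hin [Hk [Hag [Hc [Hv Hu]]]]]]] | [X [s [Hin [Hk _]]]]].
- move: Hin Hc Hv Hu; rewrite /=.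
  case: (eqVneq a X) => [haX|haX].
    subst X; rewrite hba /= => -[<-|//] _ /= Hv Hu.
    have hub : u b = v b by apply/esym/Hag; rewrite hba.
    rewrite /rk Hv Hu hub; by case: pa; case: (v b); case: pb.
  case: (eqVneq b X) => [hbX|hbX] /=; last by []. subst X.
  have hua : u a = v a by apply/esym/Hag.
  move=> [<-|[<-|//]] Hc /= Hv Hu;
    have := Hc _ (or_introl erefl); rewrite /sat_lit /= => Hva;
    rewrite /rk Hv Hu hua Hva; by case: pa; case: pb.
- move: Hin Hk; rewrite /=.
  case: (a == X); case: (b == X) => /=; intuition subst; discriminate.
Qed.

Lemma ind_rk v u : induced (prescriptive CC) v u -> rk v <= rk u.
Proof.
elim=> [x y /flip_rk /ltnW //| x // | x y z _ h1 _ h2]; exact: leq_trans h1 h2.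
Qed.

End S.

Theorem mainTheorem2 (V : eqType) (a b : V) (pa pb : bool) :
  a != b ->
  let phi : literal V := (a, pa) in
  let psi : literal V := (b, pb) in
  let C : seq (obligation V) :=
    [:: Obl [::] phi; Obl [:: neg_lit phi] psi; Obl [:: phi] (neg_lit psi)] in
  consistent (prescriptive C) /\
  is_preorder (induced (prescriptive C)) /\
  (forall n, List.In n C -> satisfies_obl (induced (prescriptive C)) n).
Proof.
move=> hab phi psi C.
have hba : (b == a) = false by apply/negbTE; rewrite eq_sym.
split; [|split].
- move=> [v [u [Hs Hi]]].
  have h1 := @flip_rk V a b pa pb hab v u (or_introl Hs).
  have h2 := @ind_rk V a b pa pb hab _ _ Hi.
  by move: (leq_ltn_trans h2 h1); rewrite ltnn.
- split; first by move=> x; apply: rt_refl.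
  by move=> x y z; apply: rt_trans.
- move=> n [<-|[<-|[<-|//]]] v u Hcv Hcu Hv [Hag Hi]; move: Hcv Hcu Hv Hag; rewrite /phi /psi /=; move=> Hcv Hcu Hv Hag;
  have h := @ind_rk V a b pa pb hab _ _ Hi; move: h Hv; rewrite /sat_lit /rk /=; clear Hi Hag; clearbody C; clear C phi psi.
  + clear Hcv Hcu; by case: (v a); case: (u a); case: (v b); case: (u b); case: pa; case: pb.
  + move: (Hcv _ (or_introl erefl)) (Hcu _ (or_introl erefl)); clear Hcv Hcu; rewrite /sat_lit /=.
    by case: (v a); case: (u a); case: (v b); case: (u b); case: pa; case: pb.
  + move: (Hcv _ (or_introl erefl)) (Hcu _ (or_introl erefl)); clear Hcv Hcu; rewrite /sat_lit /=.
    by case: (v a); case: (u a); case: (v b); case: (u b); case: pa; case: pb.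
Qed.
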